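(* Let $k\ge1$, let $A,B$ be disjoint $n$-element sets, and let $\mathcal S$ be a semi-intersecting family with parameters $n$ and $k$ on base sets $A,B$. If $|\mathcal S|>2k^3$, then either every element of $A$ has degree at most $k$ in $\mathcal S$, or every element of $B$ has degree at most $k$ in $\mathcal S$.
   Context: A semi-intersecting family with parameters $n,k$ on disjoint $n$-element base sets $A,B$ is a family $\mathcal S$ of subsets of $A\cup B$ with $|S\cap A|=|S\cap B|=k$ for every $S\in\mathcal S$, such that any two distinct $S,T\in\mathcal S$ satisfy exactly one of $S\cap T\cap A=\emptyset$, $S\cap T\cap B=\emptyset$. The degree of a vertex $v$ in $\mathcal S$ is the number of members of $\mathcal S$ containing $v$. *)

(* Defs.v *)
From mathcomp Require Import all_boot.
Set Implicit Arguments. Unset Strict Implicit. Unset Printing Implicit Defensive.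

Definition semi_intersecting (T : finType) (n k : nat) (A B : {set T})
    (F : {set {set T}}) : Prop :=
  [/\ [disjoint A & B], #|A| = n, #|B| = n,
      (forall S, S \in F -> [/\ S \subset A :|: B, #|S :&: A| = k & #|S :&: B| = k]) &
      (forall S U, S \in F -> U \in F -> S != U ->
         (S :&: U :&: A == set0) (+) (S :&: U :&: B == set0))].

Definition degree (T : finType) (F : {set {set T}}) (v : T) : nat :=
  #|[set S in F | v \in S]|.

(* Main.v *)
Require Import Defs.
From mathcomp Require Import all_boot.
From mathcomp Require Import zify.

Lemma card_filter (T : finType) (C : {set T}) (P : pred T) :
  #|[set Y in C | P Y]| = \sum_(Y in C) (P Y : nat).
Proof.
rewrite -sum1_card (eq_bigl (fun Y => (Y \in C) && P Y)); last by move=> Y; rewrite inE.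
rewrite big_mkcondr /=; apply: eq_bigr => Y _; by case: (P Y).
Qed.

Lemma card_split (T : finType) (C : {set T}) (P Q : pred T) :
  #|[set Y in C | P Y]| = #|[set Y in C | P Y && Q Y]| + #|[set Y in C | P Y && ~~ Q Y]|.
Proof.
rewrite !card_filter -big_split /=; apply: eq_bigr => Y _.
by case: (P Y); case: (Q Y).
Qed.

Lemma count_disj (T : finType) (C : {set {set T}}) (D : {set T}) :
  (forall Y, Y \in C -> Y :&: D != set0) ->
  (forall Y Y', Y \in C -> Y' \in C -> Y != Y' -> Y :&: Y' :&: D = set0) ->
  #|C| <= #|D|.
Proof.
move=> hne hdis.
pose f (Y : {set T}) := [pick z in Y :&: D].
have fS : forall Y, Y \in C -> exists2 z, f Y = Some z & z \in Y :&: D.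
  move=> Y hY; rewrite /f; case: pickP => [z hz|h0]; first by exists z.
  by move: (hne _ hY); case/set0Pn => z; rewrite h0.
have inj : {in C &, injective f}.
  move=> Y Y' hY hY' e; apply/eqP; apply: contraT => ne.
  have [z fz hz] := fS _ hY. have [z' fz' hz'] := fS _ hY'.
  move: e; rewrite fz fz' => -[ezz]. subst z'.
  have := hdis _ _ hY hY' ne. move/setP/(_ z).
  move: hz hz'; rewrite !inE => /andP[-> ->] /andP[-> _]. done.
rewrite -(card_in_imset inj) -(card_imset D (@Some_inj _)).
apply: subset_leq_card; apply/subsetP => o /imsetP[Y hY ->].
have [z fz hz] := fS _ hY; rewrite fz; apply/imsetP; exists z => //.
by move: hz; rewrite inE => /andP[].
Qed.

Lemma meetA (T : finType) (A B : {set T}) (F : {set {set T}}) S U a :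
  (forall S U, S \in F -> U \in F -> S != U ->
         (S :&: U :&: A == set0) (+) (S :&: U :&: B == set0)) ->
  S \in F -> U \in F -> S != U -> a \in S -> a \in U -> a \in A ->
  S :&: U :&: B = set0.
Proof.
move=> hX hS hU ne aS aU aA.
have := hX _ _ hS hU ne.
have -> : (S :&: U :&: A == set0) = false.
  by apply/negbTE/set0Pn; exists a; rewrite !inE aS aU aA.
by move=> /= /eqP.
Qed.

Arguments meetA {T A B F S U a}.

Lemma key (T : finType) (k : nat) (A B : {set T}) (F : {set {set T}}) x v :
  1 <= k ->
  (forall S, S \in F -> #|S :&: A| = k /\ #|S :&: B| = k) ->
  (forall S U, S \in F -> U \in F -> S != U ->
         (S :&: U :&: A == set0) (+) (S :&: U :&: B == set0)) ->
  x \in A -> v \in B ->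
  k * k - k + 2 <= degree F x -> k.+1 <= degree F v -> False.
Proof.
move=> k1 hsz hX xA vB dx dv.
have hXB : forall S U, S \in F -> U \in F -> S != U ->
         (S :&: U :&: B == set0) (+) (S :&: U :&: A == set0).
  by move=> S U hS hU ne; rewrite addbC; apply: hX.
set W' := [set S in F | (v \in S) && (x \notin S)].
set Y' := [set S in F | (x \in S) && (v \notin S)].
have both : forall y z, #|[set S in F | (y \in S) && (z \in S)]| <= 1 ->
   #|[set S in F | y \in S]| <= #|[set S in F | (y \in S) && (z \notin S)]| + 1.
  move=> y z h; rewrite (@card_split _ F (fun S : {set T} => y \in S) (fun S => z \in S)) /=. rewrite addnC; apply: leq_add; [exact: leqnn | exact: h].
have hb : forall y z, y \in A -> z \in B -> #|[set S in F | (y \in S) && (z \in S)]| <= 1.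
  move=> y z yA zB; rewrite leqNgt; apply/negP => /card_gt1P[S [U [hS hU ne]]].
  move: hS hU; rewrite !inE => /andP[hS /andP[yS zS]] /andP[hU /andP[yU zU]].
  have := meetA hX hS hU ne yS yU yA.
  by move/setP/(_ z); rewrite !inE zS zU zB.
have hW : k <= #|W'|.
  have e : [set S in F | (v \in S) && (x \in S)] = [set S in F | (x \in S) && (v \in S)].
    by apply/setP => S; rewrite !inE [(v \in S) && _]andbC.
  have := both v x (ltac:(rewrite e; exact: hb _ _ xA vB)).
  rewrite /degree in dv; rewrite /W'; lia.
have hY : k * k - k + 1 <= #|Y'|.
  have := both x v (hb _ _ xA vB). rewrite /degree in dx. rewrite /Y'; lia.
have h1 : #|W'| * #|Y'| <= \sum_(W in W') \sum_(Y in Y')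
     ((W :&: Y :&: A != set0) + (W :&: Y :&: B != set0)).
  rewrite -sum_nat_const; apply: leq_sum => W hW'.
  rewrite -sum1_card; apply: leq_sum => Y hY'.
  move: hW' hY'; rewrite !inE => /andP[hWF /andP[vW _]] /andP[hYF /andP[_ vY]].
  have ne : W != Y by apply/eqP => e; move: vY; rewrite -e vW.
  have := hX _ _ hWF hYF ne.
  by case: (W :&: Y :&: A == set0); case: (W :&: Y :&: B == set0).
rewrite (eq_bigr (fun W => \sum_(Y in Y') (W :&: Y :&: A != set0 : nat) +
   \sum_(Y in Y') (W :&: Y :&: B != set0 : nat))) in h1; last by move=> W _; rewrite big_split.
rewrite big_split /= exchange_big /= in h1.
have hBp : forall W, W \in W' -> \sum_(Y in Y') (W :&: Y :&: B != set0 : nat) <= k - 1.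
  move=> W hW'; rewrite -card_filter.
  move: hW'; rewrite inE => /andP[hWF /andP[vW _]].
  have -> : k - 1 = #|W :&: B :\ v|.
    have [_ e] := hsz _ hWF.
    move: e; rewrite (cardsD1 v (W :&: B)) !inE vW vB /= => e; lia.
  apply: count_disj.
    move=> Y; rewrite inE => /andP[hY' /set0Pn[z]].
    move: hY'; rewrite !inE => /andP[_ /andP[_ vY]] /andP[/andP[zW zY] zB].
    apply/set0Pn; exists z; rewrite !inE zW zY zB /= ?andbT.
    by apply/eqP => e; move: vY; rewrite -e zY.
  move=> Y Y'' ; rewrite !inE => /andP[/andP[hYF /andP[xY _]] _] /andP[/andP[hYF' /andP[xY' _]] _] ne.
  have := meetA hX hYF hYF' ne xY xY' xA.
  move/setP => E; apply/setP => z; move: (E z); rewrite !inE.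
  by case: (z \in Y); case: (z \in Y''); case: (z \in B); rewrite ?andbF.
have hAp : forall Y, Y \in Y' -> \sum_(W in W') (W :&: Y :&: A != set0 : nat) <= k - 1.
  move=> Y hY'; rewrite -card_filter.
  move: hY'; rewrite inE => /andP[hYF /andP[xY _]].
  have -> : k - 1 = #|Y :&: A :\ x|.
    have [e _] := hsz _ hYF.
    move: e; rewrite (cardsD1 x (Y :&: A)) !inE xY xA /= => e; lia.
  apply: count_disj.
    move=> W; rewrite inE => /andP[hW' /set0Pn[z]].
    move: hW'; rewrite !inE => /andP[_ /andP[_ xW]] /andP[/andP[zW zY] zA].
    apply/set0Pn; exists z; rewrite !inE zY zA zW /= ?andbT.
    by apply/eqP => e; move: xW; rewrite -e zW.
  move=> W W''; rewrite !inE => /andP[/andP[hWF /andP[vW _]] _] /andP[/andP[hWF' /andP[vW' _]] _] ne.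
  have := meetA hXB hWF hWF' ne vW vW' vB.
  move/setP => E; apply/setP => z; move: (E z); rewrite !inE.
  by case: (z \in W); case: (z \in W''); case: (z \in A); rewrite ?andbF.
have s1 : \sum_(W in W') \sum_(Y in Y') (W :&: Y :&: B != set0 : nat) <= #|W'| * (k - 1).
  by rewrite -sum_nat_const; apply: leq_sum.
have s2 : \sum_(Y in Y') \sum_(W in W') (W :&: Y :&: A != set0 : nat) <= #|Y'| * (k - 1).
  by rewrite -sum_nat_const; apply: leq_sum.
have H := leq_trans h1 (leq_add s2 s1).
clear h1 s1 s2.
move: H hW hY k1.
set a := #|W'|. set b := #|Y'|.
move=> H hW hY k1.
have e : k = (k - 1).+1 by lia.
move: H hW hY; rewrite e; set m := k - 1; rewrite subSS subn0. nia.
Qed.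

Arguments key {T k A B F x v}.

Theorem lemma2p2 (T : finType) (n k : nat) (A B : {set T}) (F : {set {set T}}) :
  1 <= k ->
  semi_intersecting n k A B F ->
  2 * k ^ 3 < #|F| ->
  (forall v, v \in A -> degree F v <= k) \/ (forall v, v \in B -> degree F v <= k).
Proof.
move=> k1 [dAB _ _ hS hX] hF.
have hsz : forall S, S \in F -> #|S :&: A| = k /\ #|S :&: B| = k.
  by move=> S /hS[].
have hsz' : forall S, S \in F -> #|S :&: B| = k /\ #|S :&: A| = k.
  by move=> S /hS[_ -> ->].
have hXB : forall S U, S \in F -> U \in F -> S != U ->
         (S :&: U :&: B == set0) (+) (S :&: U :&: A == set0).
  by move=> S U hS' hU ne; rewrite addbC; apply: hX.
have [Z hZ] : exists Z, Z \in F.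
  have : 0 < #|F| by lia.
  by case/card_gt0P => Z hZ; exists Z.
have [ZAB ZA ZB] := hS _ hZ.
have [u uZ du] : exists2 u, u \in Z & k * k - k + 2 <= degree F u.
  case: (boolP [exists u in Z, k * k - k + 2 <= degree F u]) => [/exists_inP[u ? ?]|]; first by exists u.
  rewrite negb_exists_in => /forall_inP hall; exfalso.
  have hZc : #|Z| <= k + k.
    rewrite -{1}ZA -ZB; apply: leq_trans (leq_card_setU _ _).
    apply: subset_leq_card; apply/subsetP => z zZ.
    move/subsetP: ZAB => /(_ z zZ); rewrite !inE zZ /=.
    by case/orP => ->; rewrite ?orbT.
  have c1 : #|F| <= \sum_(u in Z) degree F u.
    rewrite /degree (eq_bigr (fun u => \sum_(S in F) (u \in S : nat))); last first.
      by move=> u _; rewrite card_filter.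
    rewrite exchange_big /= -sum1_card; apply: leq_sum => S hSF.
    have [w wS wZ] : exists2 w, w \in S & w \in Z.
      case: (eqVneq S Z) => [->|ne].
        have : 0 < #|Z :&: A| by rewrite ZA.
        by case/card_gt0P => w; rewrite inE => /andP[wZ _]; exists w.
      have := hX _ _ hSF hZ ne.
      case eA: (S :&: Z :&: A == set0) => /=.
        move=> /set0Pn[w]; rewrite !inE => /andP[/andP[? ?] _]; by exists w.
      move=> _; move/set0Pn: eA => [w]; rewrite !inE => /andP[/andP[? ?] _]; by exists w.
    by rewrite (bigD1 w) //= wS.
  have c2 : \sum_(u in Z) degree F u <= \sum_(u in Z) (k * k - k + 1).
    apply: leq_sum => w wZ; have := hall w wZ; lia.
  rewrite sum_nat_const in c2.
  have : #|F| <= (k + k) * (k * k - k + 1).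
    apply: leq_trans (leq_trans c1 c2) _; exact: leq_mul.
  move: hF; rewrite expnS expnS expn1. nia.
have : u \in A :|: B by move/subsetP: ZAB; apply.
rewrite inE => /orP[uA|uB].
  right => v vB; rewrite leqNgt; apply/negP => dv.
  exact: (key k1 hsz hX uA vB du dv).
left => v vA; rewrite leqNgt; apply/negP => dv.
exact: (key k1 hsz' hXB uB vA du dv).
Qed.
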